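(* Let $\beta\in\mathbb{R}$. Then $$\lim_{v\to\infty}\frac{d_H((0,1),(\beta,v))}{\sqrt v}=2,$$ and consequently $\lim_{v\to\infty}\frac{d_H((0,1),(\beta,v))}{d_H((0,1),(0,v))}=1$.
   Context: Let $\mathcal{H}=\{(x,v)\in\mathbb{R}^2:v\ge0\}$ and $d_H$ the Riemannian distance on $\mathcal{H}$ induced by the metric $ds^2=v^{-1}(dx^2+dv^2)$ on the open upper half-plane (extended to the boundary). *)

(* Defs.v *)
From Stdlib Require Import Reals.
From Coquelicot Require Import Coquelicot.
Open Scope R_scope.

Definition H_curve (cx cv : R -> R) (p q : R * R) : Prop :=
  (forall t, 0 <= t <= 1 ->
     ex_derive cx t /\ ex_derive cv t /\
     continuous (Derive cx) t /\ continuous (Derive cv) t /\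
     0 < cv t) /\
  cx 0 = fst p /\ cv 0 = snd p /\ cx 1 = fst q /\ cv 1 = snd q.

(* Length of a curve for the metric ds^2 = v^{-1} (dx^2 + dv^2). *)
Definition H_length (cx cv : R -> R) : R :=
  RInt (fun t => sqrt ((Derive cx t)^2 + (Derive cv t)^2) / sqrt (cv t)) 0 1.

Definition d_H (p q : R * R) : R :=
  real (Glb_Rbar (fun L => exists cx cv, H_curve cx cv p q /\ L = H_length cx cv)).

(* Main.v *)
Require Import Defs.
From Stdlib Require Import Reals Lra.
From Coquelicot Require Import Coquelicot.
Open Scope R_scope.

Lemma cpt (f : R -> R) x : continuous f x -> continuity_pt f x.
Proof. intro H; apply continuity_pt_filterlim; exact H. Qed.

Lemma cont_div_sqrt (a c : R -> R) x :
  continuous a x -> continuous c x -> 0 < c x ->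
  continuous (fun t => a t / sqrt (c t)) x.
Proof.
  intros Ha Hc Hp. apply continuity_pt_filterlim.
  apply (continuity_pt_div a (fun t => sqrt (c t))).
  - now apply cpt.
  - apply (continuity_pt_comp c sqrt). now apply cpt. apply continuity_pt_sqrt; lra.
  - apply Rgt_not_eq, sqrt_lt_R0; lra.
Qed.

Lemma cont_norm (a b : R -> R) x :
  continuous a x -> continuous b x ->
  continuous (fun t => sqrt (a t ^ 2 + b t ^ 2)) x.
Proof.
  intros Ha Hb. apply continuity_pt_filterlim.
  apply (continuity_pt_comp (fun t => a t ^ 2 + b t ^ 2) sqrt).
  - apply (continuity_pt_plus (fun t => a t ^ 2) (fun t => b t ^ 2)).
    + apply (continuity_pt_comp a (fun y => y ^ 2)). now apply cpt.
      apply derivable_continuous_pt; apply derivable_pt_pow.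
    + apply (continuity_pt_comp b (fun y => y ^ 2)). now apply cpt.
      apply derivable_continuous_pt; apply derivable_pt_pow.
  - apply continuity_pt_sqrt. nra.
Qed.

Lemma ftc cx cv p q : H_curve cx cv p q ->
  is_RInt (fun t => Derive cv t / sqrt (cv t)) 0 1 (2 * sqrt (cv 1) - 2 * sqrt (cv 0)).
Proof.
  intros [H _].
  assert (E := is_RInt_derive (fun t => 2 * sqrt (cv t)) (fun t => Derive cv t / sqrt (cv t)) 0 1).
  rewrite Rmin_left, Rmax_right in E by lra.
  apply E.
  - intros x Hx. destruct (H x Hx) as (H1 & H2 & H3 & H4 & H5).
    auto_derive. split; [exact H2|split;[exact H5|auto]].
    idtac.
    assert (0 < sqrt (cv x)) by (apply sqrt_lt_R0; lra). change (Derive (fun x0 => cv x0) x) with (Derive cv x). field; lra.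
  - intros x Hx. destruct (H x Hx) as (H1 & H2 & H3 & H4 & H5).
    apply cont_div_sqrt; auto. exact (@ex_derive_continuous R_AbsRing R_NormedModule cv x H2).
Qed.

Lemma lower cx cv p q : H_curve cx cv p q ->
  2 * sqrt (cv 1) - 2 * sqrt (cv 0) <= H_length cx cv.
Proof.
  intros Hc. rewrite <- (is_RInt_unique _ _ _ _ (ftc _ _ _ _ Hc)).
  destruct Hc as [H _]. unfold H_length.
  apply RInt_le. lra.
  - apply (ex_RInt_continuous (V:=R_CompleteNormedModule)). rewrite Rmin_left, Rmax_right by lra.
    intros x Hx. destruct (H x Hx) as (H1 & H2 & H3 & H4 & H5).
    apply cont_div_sqrt; auto. 
    exact (@ex_derive_continuous R_AbsRing R_NormedModule cv x H2).
  - apply (ex_RInt_continuous (V:=R_CompleteNormedModule)). rewrite Rmin_left, Rmax_right by lra.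
    intros x Hx. destruct (H x Hx) as (H1 & H2 & H3 & H4 & H5).
    apply (cont_div_sqrt (fun t => sqrt (Derive cx t ^ 2 + Derive cv t ^ 2))); auto.
    apply cont_norm; auto.
    exact (@ex_derive_continuous R_AbsRing R_NormedModule cv x H2).
  - intros x Hx. destruct (H x ltac:(lra)) as (H1 & H2 & H3 & H4 & H5).
    unfold Rdiv. apply Rmult_le_compat_r.
    + left; apply Rinv_0_lt_compat, sqrt_lt_R0; lra.
    + apply Rle_trans with (Rabs (Derive cv x)). apply Rle_abs.
      rewrite <- sqrt_Rsqr_abs. apply sqrt_le_1_alt. unfold Rsqr.
      nra.
Qed.

Lemma Derive_lin a b t : Derive (fun t => a + b * t) t = b.
Proof. apply is_derive_unique. auto_derive; auto. ring. Qed.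

Lemma line_curve beta v : 1 < v ->
  H_curve (fun t => 0 + beta * t) (fun t => 1 + (v - 1) * t) (0, 1) (beta, v).
Proof.
  intros Hv. split; [|simpl; repeat split; ring].
  intros t Ht. repeat split.
  - auto_derive; auto.
  - auto_derive; auto.
  - apply (continuous_ext (fun _ => beta)). intros; now rewrite Derive_lin.
    apply continuous_const.
  - apply (continuous_ext (fun _ => v - 1)). intros; now rewrite Derive_lin.
    apply continuous_const.
  - nra.
Qed.

Lemma line_length beta v : 1 < v ->
  H_length (fun t => 0 + beta * t) (fun t => 1 + (v - 1) * t)
  <= 2 * sqrt v - 2 + 2 * Rabs beta.
Proof.
  intros Hv.
  set (K := sqrt (beta ^ 2 + (v - 1) ^ 2) / (v - 1)).
  assert (F := is_RInt_scal _ _ _ K _ (ftc _ _ _ _ (line_curve beta v Hv))).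
  assert (G : is_RInt (fun t => sqrt (Derive (fun t => 0 + beta * t) t ^ 2 + Derive (fun t => 1 + (v - 1) * t) t ^ 2) / sqrt (1 + (v - 1) * t)) 0 1
     (K * (2 * sqrt v - 2))).
  { replace (K * (2 * sqrt v - 2)) with (scal K (2 * sqrt (1 + (v - 1) * 1) - 2 * sqrt (1 + (v - 1) * 0))).
    2: { change (scal K ?y) with (K * y). replace (1 + (v - 1) * 1) with v by ring.
         replace (1 + (v - 1) * 0) with 1 by ring. rewrite sqrt_1. match goal with |- ?a = ?b => change (@eq R a b) end. ring. }
    eapply is_RInt_ext; [|exact F]. intros x Hx. cbv beta.
    rewrite Rmin_left, Rmax_right in Hx by lra.
    rewrite !Derive_lin. change (scal K ?y) with (K * y). unfold K.
    match goal with |- ?a = ?b => change (@eq R a b) end. field.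
    split. apply Rgt_not_eq, sqrt_lt_R0. nra. lra. }
  unfold H_length. rewrite (is_RInt_unique _ _ _ _ G).
  assert (Hs : sqrt v * sqrt v = v) by (apply sqrt_sqrt; lra).
  assert (Hs1 : 1 < sqrt v).
  { rewrite <- sqrt_1. apply sqrt_lt_1_alt. lra. }
  assert (HQ : sqrt (beta ^ 2 + (v - 1) ^ 2) <= Rabs beta + (v - 1)).
  { rewrite <- (sqrt_square (Rabs beta + (v - 1))) by (pose proof (Rabs_pos beta); lra).
    apply sqrt_le_1_alt. rewrite <- (pow2_abs beta). pose proof (Rabs_pos beta). nra. }
  unfold K. set (Q := sqrt (beta ^ 2 + (v - 1) ^ 2)) in *.
  set (s := sqrt v) in *. rewrite <- Hs.
  replace (Q / (s * s - 1) * (2 * s - 2)) with (2 * Q / (s + 1)) by (field; lra).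
  apply Rle_div_l. lra. pose proof (Rabs_pos beta). nra.
Qed.

Lemma dH_bounds beta v : 1 < v ->
  2 * sqrt v - 2 <= d_H (0, 1) (beta, v) <= 2 * sqrt v - 2 + 2 * Rabs beta.
Proof.
  intros Hv. unfold d_H.
  set (E := fun L => exists cx cv, H_curve cx cv (0, 1) (beta, v) /\ L = H_length cx cv).
  destruct (Glb_Rbar_correct E) as [Hlb Hglb].
  assert (Hlow : Rbar_le (2 * sqrt v - 2) (Glb_Rbar E)).
  { apply Hglb. intros L (cx & cv & Hc & ->).
    pose proof (lower _ _ _ _ Hc) as Hl.
    destruct Hc as (_ & _ & H0 & _ & H1). simpl in H0, H1. rewrite H0, H1, sqrt_1 in Hl.
    simpl. lra. }
  assert (Hup : Rbar_le (Glb_Rbar E) (H_length (fun t => 0 + beta * t) (fun t => 1 + (v - 1) * t))).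
  { apply Hlb. exists (fun t => 0 + beta * t), (fun t => 1 + (v - 1) * t).
    split; [apply line_curve; lra | reflexivity]. }
  pose proof (line_length beta v Hv).
  destruct (Glb_Rbar E) as [r| |]; simpl in *; try tauto. lra.
Qed.

Lemma lim1 beta : is_lim (fun v => d_H (0, 1) (beta, v) / sqrt v) p_infty 2.
Proof.
  apply is_lim_spec. intros eps. simpl.
  set (C := 2 + 2 * Rabs beta).
  assert (HC : 0 <= C) by (unfold C; pose proof (Rabs_pos beta); lra).
  pose proof (cond_pos eps) as He.
  exists (Rmax 1 ((C / eps) ^ 2)). intros x Hx.
  assert (Hx1 : 1 < x) by (eapply Rle_lt_trans; [apply Rmax_l|exact Hx]).
  assert (Hx2 : (C / eps) ^ 2 < x) by (eapply Rle_lt_trans; [apply Rmax_r|exact Hx]).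
  assert (Hs : C / eps < sqrt x).
  { rewrite <- (sqrt_pow2 (C / eps)). apply sqrt_lt_1_alt. split. apply pow2_ge_0. exact Hx2.
    apply Rmult_le_pos; [lra | left; apply Rinv_0_lt_compat; lra]. }
  assert (Hs' : C < eps * sqrt x).
  { apply Rmult_lt_compat_l with (r := eps) in Hs; auto. replace (eps * (C / eps)) with C in Hs by (field; lra). exact Hs. }
  assert (Hs0 : 0 < sqrt x) by (apply sqrt_lt_R0; lra).
  destruct (dH_bounds beta x Hx1) as [L U].
  set (d := d_H (0, 1) (beta, x)) in *. set (s := sqrt x) in *.
  assert (Hd : d / s - 2 = (d - 2 * s) / s) by (field; lra).
  rewrite Hd, Rabs_div by lra. rewrite (Rabs_pos_eq s) by lra.
  apply Rlt_div_l. lra.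
  pose proof (Rabs_pos beta).
  apply Rle_lt_trans with C; [|lra].
  apply Rabs_le. unfold C. lra.
Qed.

Theorem lemma2p13 (beta : R) :
  is_lim (fun v => d_H (0, 1) (beta, v) / sqrt v) p_infty 2 /\
  is_lim (fun v => d_H (0, 1) (beta, v) / d_H (0, 1) (0, v)) p_infty 1.
Proof.
  split. apply lim1.
  assert (H := is_lim_div _ _ p_infty 2 2 (lim1 beta) (lim1 0)).
  simpl in H. replace (2 * / 2) with 1 in H by field.
  eapply is_lim_ext_loc; [|apply H].
  - simpl. exists 1. intros x Hx.
    destruct (dH_bounds 0 x Hx) as [L U].
    assert (Hs1 : 1 < sqrt x) by (rewrite <- sqrt_1; apply sqrt_lt_1_alt; lra).
    field. split; lra.
  - intro E; injection E; lra.
  - exact I.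
Qed.
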